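(* Let $A$ be a T-brace and let $a\in\zeta_2(\star,A)$ be an element of finite order in $(A,+)$. Suppose that the torsion subgroup of the additive group of $\zeta(\star,A)$ is a $p$-group for some prime $p$. If the additive group of $\zeta_2(\star,A)$ is not periodic, then the additive order of $a\star a$ is at most $p$ (i.e. $p(a\star a)=0$).
   Context: A (left) brace is a set $A$ with two operations $+$ and $\cdot$ such that $(A,+)$ is an abelian group, $(A,\cdot)$ is a group, and $a(b+c)=ab+ac-a$ for all $a,b,c\in A$. Put $a\star b=ab-a-b$. A subbrace is a subset which is a subgroup of both $(A,+)$ and $(A,\cdot)$; a subbrace $L$ is an ideal if $a\star z, z\star a\in L$ for all $a\in A$, $z\in L$, and then the quotient brace $A/L$ is defined. $A$ is a T-brace if whenever $I$ is an ideal of $J$ and $J$ is an ideal of $A$, then $I$ is an ideal of $A$. The $\star$-center is $\zeta(\star,A)=\{a: a\star x=x\star a=0\ \forall x\}$; $\zeta_2(\star,A)$ is given by $\zeta_2(\star,A)/\zeta(\star,A)=\zeta(\star,A/\zeta(\star,A))$. *)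

(* Defs.v *)
From HB Require Import structures.
From mathcomp Require Import all_boot all_algebra.
Set Implicit Arguments. Unset Strict Implicit. Unset Printing Implicit Defensive.
Import GRing.Theory.
Local Open Scope ring_scope.

Record brace (V : zmodType) := Brace {
  bmul : V -> V -> V;
  bone : V;
  binv : V -> V;
  bmulA : forall a b c, bmul a (bmul b c) = bmul (bmul a b) c;
  bmul1 : forall a, bmul bone a = a;
  bmulV : forall a, bmul (binv a) a = bone;
  bmulD : forall a b c, bmul a (b + c) = bmul a b + bmul a c - a
}.

Section BraceDefs.
Variables (V : zmodType) (B : brace V).

Definition star (a b : V) : V := bmul B a b - a - b.

Definition subbrace (L : V -> Prop) : Prop :=
  [/\ L 0, (forall x y, L x -> L y -> L (x - y)),
      L (bone B), (forall x y, L x -> L y -> L (bmul B x y))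
    & (forall x, L x -> L (binv B x))].

Definition ideal_in (J I : V -> Prop) : Prop :=
  [/\ subbrace I, (forall z, I z -> J z)
    & (forall a z, J a -> I z -> I (star a z) /\ I (star z a))].

Definition ideal (I : V -> Prop) : Prop := ideal_in (fun _ => True) I.

Definition T_brace : Prop :=
  forall I J : V -> Prop, ideal J -> ideal_in J I -> ideal I.

Definition zeta (a : V) : Prop := forall x, star a x = 0 /\ star x a = 0.

(* second star-center: a + zeta lies in the star-center of A/zeta, i.e.
   (a+zeta)*(x+zeta) = a*x + zeta and x*a + zeta are trivial in A/zeta. *)
Definition zeta2 (a : V) : Prop := forall x, zeta (star a x) /\ zeta (star x a).

Definition add_finite_order (a : V) : Prop := exists n : nat, (0 < n)%N /\ a *+ n = 0.

End BraceDefs.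

(* Main.v *)
Require Import Defs.
From HB Require Import structures.
From Stdlib Require Import Classical.
From mathcomp Require Import all_boot all_algebra.
Import GRing.Theory.
Local Open Scope ring_scope.

Section S.
Variables (V : zmodType) (B : brace V).
Local Notation m := (bmul B).
Local Notation st := (star B).
Local Notation Z := (zeta B).
Local Notation Z2 := (zeta2 B).

Lemma stD a x y : st a (x + y) = st a x + st a y.
Proof.
rewrite /star bmulD [RHS]addrACA -opprD [X in _ = X - _]addrACA.
by rewrite addrA.
Qed.
Lemma stB a : zmod_morphism (st a).
Proof.
move=> x y; apply/(addIr (st a y)); rewrite -stD subrK.
by rewrite subrK.
Qed.
End S.

HB.instance Definition _ (V : zmodType) (B : brace V) (a : V) :=
  GRing.isZmodMorphism.Build V V (star B a) (@stB V B a).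

Arguments star : simpl never.
Section T.
Variables (V : zmodType) (B : brace V).
Local Notation m := (bmul B).
Local Notation st := (star B).
Local Notation Z := (zeta B).
Local Notation Z2 := (zeta2 B).
Lemma mul0r' a : m a 0 = a.
Proof.
have H := bmulD B a 0 0; rewrite addr0 in H.
have := congr1 (fun t => t - m a 0) H; rewrite subrr addrAC addrK => /esym.
exact: subr0_eq.
Qed.

Lemma bone0 : bone B = 0.
Proof. by rewrite -(mul0r' (bone B)) bmul1. Qed.

Lemma mul0l' x : m 0 x = x.
Proof. by rewrite -bone0 bmul1. Qed.

Lemma mE u v : m u v = st u v + u + v.
Proof. by rewrite /star (addrAC (m u v - u)) !subrK. Qed.

Lemma st_assoc u v x : st (m u v) x = st u (st v x) + st v x + st u x.
Proof.
rewrite {1}/star -bmulA (mE v x) (mE u (st v x + v + x)).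
rewrite (@stD V B u (st v x + v) x) (@stD V B u (st v x) v) (mE u v).
move: (st u (st v x)) (st u v) (st u x) (st v x) => A Bv C S.
rewrite !opprD !addrA.
rewrite (ACl ((1*5*3) * ((2*8)*(4*9)*(6*10)*(7*11)))%AC) /=.
by rewrite !subrr !addr0.
Qed.

Lemma stBr a x y : st a (x - y) = st a x - st a y.
Proof. exact: (raddfB (star B a)). Qed.
Lemma stDr a x y : st a (x + y) = st a x + st a y.
Proof. exact: (raddfD (star B a)). Qed.
Lemma stMzr a x k : st a (x *~ k) = st a x *~ k.
Proof. exact: (raddfMz (star B a)). Qed.
Lemma stMnr a x n : st a (x *+ n) = st a x *+ n.
Proof. exact: (raddfMn (star B a)). Qed.

Lemma st0l x : st 0 x = 0.
Proof. by rewrite /star mul0l' subr0 subrr. Qed.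

Lemma st0r x : st x 0 = 0.
Proof. exact: (raddf0 (star B x)). Qed.

Lemma mZ u v : st u v = 0 -> m u v = u + v.
Proof. by move=> h; rewrite mE h add0r. Qed.

Lemma Z0 : Z 0.
Proof. by move=> x; rewrite st0l st0r. Qed.

Lemma ZZ2 z : Z z -> Z2 z.
Proof. by move=> h x; have [-> ->] := h x; split; exact: Z0. Qed.

Lemma st_subZ w s x : Z s -> st (w - s) x = st w x.
Proof.
move=> hs.
have e : w = m (w - s) s by rewrite mZ ?subrK //; exact: (hs (w - s)).2.
by rewrite {2}e st_assoc (hs x).1 st0r !add0r.
Qed.

Lemma LA u v x : Z2 v -> st (u + v) x = st u x + st v x.
Proof.
move=> hv.
have hs : Z (st u v) := (hv u).2.
have e : u + v = m u v - st u v.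
  by rewrite mE -(addrA (st u v)) [RHS]addrC addKr.
by rewrite e st_subZ // st_assoc (((hv x).1 u).2) add0r addrC.
Qed.

Lemma stBl u v x : Z2 v -> st (u - v) x = st u x - st v x.
Proof. by move=> hv; have := LA (u - v) v x hv; rewrite subrK => ->; rewrite addrK. Qed.

Lemma stNl v x : Z2 v -> st (- v) x = - st v x.
Proof. by move=> hv; rewrite -sub0r stBl // st0l sub0r. Qed.

Lemma ZB z1 z2 : Z z1 -> Z z2 -> Z (z1 - z2).
Proof.
move=> h1 h2 x; split.
  by rewrite stBl; [rewrite (h1 x).1 (h2 x).1 subr0 | exact: ZZ2].
by rewrite stBr (h1 x).2 (h2 x).2 subr0.
Qed.

Lemma ZN z : Z z -> Z (- z).
Proof. by move=> h; rewrite -sub0r; apply: ZB => //; exact: Z0. Qed.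

Lemma ZD z1 z2 : Z z1 -> Z z2 -> Z (z1 + z2).
Proof. by move=> h1 h2; rewrite -(opprK z2); apply: ZB => //; exact: ZN. Qed.

Lemma Zn z n : Z z -> Z (z *+ n).
Proof. by move=> h; elim: n => [|n IH]; [exact: Z0 | rewrite mulrS; exact: ZD]. Qed.

Lemma Zz z k : Z z -> Z (z *~ k).
Proof. by move=> h; case: k => n; [exact: Zn | rewrite NegzE mulrNz; apply: ZN; exact: Zn]. Qed.

Lemma Z2B u v : Z2 u -> Z2 v -> Z2 (u - v).
Proof.
move=> hu hv x; split.
  by rewrite stBl //; apply: ZB; [exact: (hu x).1 | exact: (hv x).1].
by rewrite stBr; apply: ZB; [exact: (hu x).2 | exact: (hv x).2].
Qed.

Lemma Z20 : Z2 0.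
Proof. by apply: ZZ2; exact: Z0. Qed.

Lemma Z2N v : Z2 v -> Z2 (- v).
Proof. by move=> h; rewrite -sub0r; apply: Z2B => //; exact: Z20. Qed.

Lemma Z2D u v : Z2 u -> Z2 v -> Z2 (u + v).
Proof. by move=> h1 h2; rewrite -(opprK v); apply: Z2B => //; exact: Z2N. Qed.

Lemma Z2n v n : Z2 v -> Z2 (v *+ n).
Proof. by move=> h; elim: n => [|n IH]; [exact: Z20 | rewrite mulrS; exact: Z2D]. Qed.

Lemma Z2z v k : Z2 v -> Z2 (v *~ k).
Proof. by move=> h; case: k => n; [exact: Z2n | rewrite NegzE mulrNz; apply: Z2N; exact: Z2n]. Qed.

Lemma stMnl v n x : Z2 v -> st (v *+ n) x = st v x *+ n.
Proof.
move=> h; elim: n => [|n IH]; first by rewrite !mulr0n st0l.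
by rewrite !mulrS LA ?IH //; exact: Z2n.
Qed.

Lemma stMzl v k x : Z2 v -> st (v *~ k) x = st v x *~ k.
Proof.
move=> h; case: k => n; first exact: stMnl.
by rewrite NegzE !mulrNz stNl ?stMnl //; exact: Z2n.
Qed.

Lemma binvE u : binv B u = - (st (binv B u) u + u).
Proof.
have := bmulV B u; rewrite bone0 mE => H.
by apply/esym/addr0_eq; rewrite addrAC.
Qed.

Lemma st_binv u x : Z (st u x) -> st (binv B u) x = - st u x.
Proof.
move=> h; have := st_assoc (binv B u) u x.
rewrite bmulV bone0 st0l (h (binv B u)).2 add0r => /esym H.
exact: esym (addr0_eq H).
Qed.

Lemma st_coset d k z x : Z2 d -> Z z ->
  st (d *~ k + z) x = st d x *~ k /\ st x (d *~ k + z) = st x d *~ k.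
Proof.
move=> hd hz; split.
  by rewrite LA ?(hz x).1 ?addr0 ?stMzl //; exact: ZZ2.
by rewrite stDr stMzr (hz x).2 addr0.
Qed.

Lemma st_cc d k k' z z' : Z2 d -> Z z -> Z z' ->
  st (d *~ k + z) (d *~ k' + z') = st d d *~ k' *~ k.
Proof.
move=> hd hz hz'; by rewrite (st_coset d k z (d *~ k' + z') hd hz).1 (st_coset d k' z' d hd hz').2.
Qed.

Definition Qs (P : V -> Prop) (d y : V) := exists k : int, P (y - d *~ k).

Lemma pure1 (x y D1 D2 : V) : (x - y) - (D1 - D2) = (x - D1) - (y - D2).
Proof.
rewrite !opprD !opprK !addrA.
by rewrite (ACl ((1*3)*2*4)%AC).
Qed.

Lemma pure2 (s x y D1 D2 : V) : (s + x + y) - (D1 + D2) = s + (x - D1) + (y - D2).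
Proof.
rewrite !opprD !addrA.
by rewrite (ACl (1*(2*4)*(3*5))%AC) /= !addrA.
Qed.

Lemma Qs_sub (P : V -> Prop) d :
  P 0 -> (forall x y, P x -> P y -> P (x - y)) ->
  [/\ Qs P d 0,
      (forall x y, Qs P d x -> Qs P d y -> Qs P d (x - y)),
      (forall x y, Qs P d x -> Qs P d y -> P (st x y) -> Qs P d (m x y)) &
      (forall x, Qs P d x -> P (st (binv B x) x) -> Qs P d (binv B x))].
Proof.
move=> P0 PB.
have PN x : P x -> P (- x) by move=> h; rewrite -sub0r; exact: PB.
have PD x y : P x -> P y -> P (x + y) by move=> h1 h2; rewrite -(opprK y); apply: PB => //; exact: PN.
split.
- by exists 0; rewrite mulr0z subr0.
- move=> x y [k1 h1] [k2 h2]; exists (k1 - k2).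
  by rewrite mulrzBr pure1; exact: PB.
- move=> x y [k1 h1] [k2 h2] hs; exists (k1 + k2).
  by rewrite mE mulrzDr pure2; apply: (PD) => //; exact: PD.
- move=> x [k h] hs; exists (- k).
  rewrite {1}binvE mulrNz opprK opprD -addrA (addrC (- x)) -opprB.
  by apply: PD; exact: PN.
Qed.

Lemma fin_of_z (w : V) (z : int) : w *~ z = 0 -> z != 0 -> add_finite_order w.
Proof.
case: z => q h hz.
  by exists q; split => //; rewrite lt0n; move: hz; apply: contra => /eqP ->.
by exists q.+1; split => //; move: h; rewrite NegzE mulrNz => /eqP; rewrite oppr_eq0 => /eqP.
Qed.

Lemma main p a : prime p -> T_brace B -> Z2 a -> add_finite_order a ->
  (forall z, Z z -> add_finite_order z -> exists k : nat, z *+ (p ^ k) = 0) ->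
  ~ (forall z, Z2 z -> add_finite_order z) -> st a a *+ p = 0.
Proof.
move=> pp hT ha [n [n0 hn]] hp hnp.
have [b0 [hb0 nb0]] : exists b0, Z2 b0 /\ ~ add_finite_order b0.
  apply: NNPP => H; apply: hnp => z hz; apply: NNPP => nz; apply: H; by exists z.
pose c := a *+ p.
have hc : Z2 c := Z2n a p ha.
have kill (u : V) : u *+ n = 0 -> forall q t, u *+ q *+ (n * t)%N = 0.
  by move=> hu q t; rewrite mulrnAC mulrnA hu !mul0rn.
have ka : st b0 a *+ n = 0 by rewrite -stMnr hn st0r.
have ka' : st a b0 *+ n = 0 by rewrite -stMnl // hn st0l.
have [w [hw [nw [wa [cw [wc ww]]]]]] : exists w, Z2 w /\ ~ add_finite_order w /\
    st w a = 0 /\ st c w = 0 /\ st w c = 0 /\ st w w = 0.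
  have he : Z (st b0 b0) := (hb0 b0).1.
  case: (classic (add_finite_order (st b0 b0))) => [[t [t0 ht]] | hne].
  - exists (b0 *+ (n * t)%N); split; first exact: Z2n.
    split.
      move=> [q [q0 hq]]; apply: nb0; exists (n * t * q)%N; split.
        by rewrite !muln_gt0 n0 t0 q0.
      by rewrite mulrnA.
    split; first by have := kill _ ka 1%N t; rewrite mulr1n stMnl.
    split; first by rewrite stMnr /c stMnl //; exact: kill _ ka' p t.
    split; first by rewrite stMnl // /c stMnr; exact: kill _ ka p t.
    have h0 : st b0 b0 *+ (n * t)%N = 0 by rewrite mulnC mulrnA ht mul0rn.
    by rewrite stMnl // stMnr h0 mul0rn.
  - exists (st b0 b0); split; first exact: ZZ2.
    split; first by [].
    split; first exact: (he a).1.
    split; first exact: (he c).2.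
    split; first exact: (he c).1.
    exact: (he _).1.
pose d := c + w.
have hd : Z2 d := Z2D c w hc hw.
pose e := st d d.
have he : Z e := (hd d).1.
pose Pe := fun y => exists j : int, y = e *~ j.
pose J := Qs Z d.
pose I := Qs Pe d.
have [J0 JB Jm Jinv] := Qs_sub Z d Z0 ZB.
have Pe0 : Pe 0 by exists 0; rewrite mulr0z.
have PeB : forall x y, Pe x -> Pe y -> Pe (x - y).
  by move=> x y [j1 ->] [j2 ->]; exists (j1 - j2); rewrite mulrzBr.
have [I0 IB Im Iinv] := Qs_sub Pe d Pe0 PeB.
have JZ2 : forall y, J y -> Z2 y.
  move=> y [k hk]; rewrite -(subrKC (d *~ k) y); apply: Z2D; [exact: Z2z | exact: ZZ2].
have Ie : forall t, I (e *~ t) by move=> t; exists 0; rewrite mulr0z subr0; exists t.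
have hJ : ideal B J.
  split.
  - split => //.
    + by rewrite bone0.
    + move=> x y hx hy; apply: Jm => //; exact: ((JZ2 y hy) x).2.
    + move=> x hx; apply: Jinv => //; exact: ((JZ2 x hx) (binv B x)).2.
  - by [].
  - move=> x z _ hz; split; exists 0; rewrite mulr0z subr0.
      exact: ((JZ2 z hz) x).2.
    exact: ((JZ2 z hz) x).1.
have hI : ideal_in B J I.
  split.
  - split => //.
    + by rewrite bone0.
    + move=> x y [k1 [j1 h1]] [k2 [j2 h2]]; apply: Im; [by exists k1, j1 | by exists k2, j2 |].
      rewrite -(subrKC (d *~ k1) x) -(subrKC (d *~ k2) y) h1 h2 st_cc //; try exact: Zz.
      by exists (k2 * k1); rewrite mulrzA.
    + move=> x [k1 [j1 h1]]; apply: Iinv; first by exists k1, j1.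
      have ex : st x x = e *~ k1 *~ k1.
        by rewrite -(subrKC (d *~ k1) x) h1 st_cc //; exact: Zz.
      rewrite st_binv ex; last by do 2 apply: Zz.
      by exists (- (k1 * k1)); rewrite mulrNz mulrzA.
  - by move=> z [k [j h]]; exists k; rewrite h; exact: Zz.
  - move=> x z [k hk] [k' [j' h']].
    rewrite -(subrKC (d *~ k) x) -(subrKC (d *~ k') z) h' !st_cc //; try exact: Zz.
    by split; rewrite -mulrzA.
have [_ _ hIA] := hT I J hJ hI.
have Id : I d by exists 1; rewrite mulr1z subrr; exists 0; rewrite mulr0z.
have [_ [k [j hkj]]] := hIA a d Logic.I Id.

have da : st d a = st c a by rewrite /d LA // wa addr0.
have ee : e = st c a *+ p.
  by rewrite /e /d LA // !stDr cw wc ww !addr0 /c stMnr.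
move: hkj; rewrite da ee.
have hZy : Z (st c a) := (hc a).1.
have fy : st c a *+ n = 0 by rewrite -stMnr hn st0r.
have fc : c *~ n = 0 by rewrite /c -pmulrn mulrnAC hn mul0rn.
move: hZy fy; rewrite -/(st c a); set y := st c a => hZy fy hkj.
have fy' : y *~ n = 0 by rewrite -pmulrn.
have hk : w *~ (n%:Z * k) = 0.
  have := congr1 (fun t => t *~ n) hkj => /=.
  rewrite mulrzBl fy' sub0r /d mulrzDl mulrzDl [c *~ k *~ n]mulrzAC fc mul0rz add0r.
  rewrite [y *+ p *~ j *~ n]mulrzAC pmulrn [y *~ p *~ n]mulrzAC fy' !mul0rz.
  by move=> /eqP; rewrite oppr_eq0 mulrzA mulrzAC => /eqP.
have k0 : k = 0.
  apply/eqP; apply/negPn/negP => kn0; apply: nw; apply: (fin_of_z _ _ hk).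
  by rewrite mulf_neq0 // -lt0n.
move: hkj; rewrite k0 mulr0z subr0 pmulrn -mulrzA => hy.
have [s hs] := hp y hZy (ex_intro _ n (conj n0 fy)).
have pw : forall s, y = y *~ ((p%:Z * j) ^+ s).
  elim => [|s' IH]; first by rewrite expr0 mulr1z.
  by rewrite exprSr mulrzA -IH -hy.
have y0 : y = 0.
  by rewrite (pw s) exprMn mulrzA -natz -natrX mulrz_nat hs mul0rz.
by rewrite -stMnl // -/c -/y.
Qed.
End T.


Theorem corollary4p6 (V : zmodType) (B : brace V) (p : nat) (a : V) :
  prime p ->
  T_brace B ->
  zeta2 B a ->
  add_finite_order a ->
  (forall z, zeta B z -> add_finite_order z -> exists k : nat, z *+ (p ^ k) = 0) ->
  ~ (forall z, zeta2 B z -> add_finite_order z) ->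
  (star B a a) *+ p = 0.
Proof. exact: main. Qed.
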